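(* The distributive law $\lambda$ of the free monad $\mathcal T_\Sigma$ over the cofree copointed functor $\langle\mathrm{Id}\times F,\pi_1\rangle$, induced by the abstract GSOS specification $\rho$ below, preserves the axioms of idempotent semirings. Consequently there is a distributive law $\kappa$ of the monad $\mathcal P_\omega((-)^* )$ over $\langle\mathrm{Id}\times F,\pi_1\rangle$ such that $i\circ q\colon\lambda\Rightarrow\kappa$ is a morphism of distributive laws. Here: - $q\colon T_\Sigma\Rightarrow T'$ is the quotient map to the free idempotent semiring monad; - $i\colon T'\Rightarrow\mathcal P_\omega((-)^* )$ is the monad isomorphism.
   Context: Work in $\mathrm{Set}$. Let $A$ be a set and $FX=2\times X^A$, where $2=\{0,1\}$. The signature functor is $\Sigma X=1+1+X\times X+X\times X$, with constants $\mathbf 0,\mathbf 1$ and binary operations $+,\cdot$. $\mathcal T_\Sigma$ is the free monad over $\Sigma$ ($T_\Sigma X$ = terms over $X$). The idempotent semiring axioms are: - $(x+y)+z=x+(y+z)$, $x+y=y+x$, $x+\mathbf 0=x$, $x+x=x$; - $(xy)z=x(yz)$, $\mathbf 1x=x=x\mathbf 1$; - $x(y+z)=xy+xz$, $(x+y)z=xz+yz$; - $\mathbf 0x=\mathbf 0=x\mathbf 0$. The monad $\mathcal P_\omega((-)^* )$ is defined by: - it sends $X$ to the set of finite sets of finite words over $X$; - $\mathcal P_\omega(f^* )(L)=\{f(x_1)\cdots f(x_n)\mid x_1\cdots x_n\in L\}$; - unit $x\mapsto\{x\}$; - multiplication $\mathcal L\mapsto\bigcup_{L_1\cdots L_n\in\mathcal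 L}\{w_1\cdots w_n\mid w_i\in L_i\}$. This monad is isomorphic to the quotient of $\mathcal T_\Sigma$ by the idempotent semiring axioms. A copointed functor is $\langle H,\epsilon\rangle$ with $\epsilon\colon H\Rightarrow\mathrm{Id}$. A distributive law over it is a distributive law $\lambda$ of the monad over $H$ satisfying $\epsilon_T\circ\lambda=T\epsilon$. Abstract GSOS specifications $\rho\colon\Sigma(\mathrm{Id}\times F)\Rightarrow FT_\Sigma$ correspond bijectively to distributive laws of $\mathcal T_\Sigma$ over $\langle\mathrm{Id}\times F,\pi_1\rangle$. Here $\rho$ is given by: - $\rho(\mathbf 0)=\langle 0,a\mapsto\mathbf 0\rangle$ and $\rho(\mathbf 1)=\langle 1,a\mapsto\mathbf 0\rangle$, where the empty sum is the term $\mathbf 0$; - $\rho(\langle x,o,f\rangle+\langle y,p,g\rangle)=\langle\max\{o,p\},a\mapsto f(a)+g(a)\rangle$; - $\rho(\langle x,o,f\rangle\cdot\langle y,p,g\rangle)=\langle\min\{o,p\},a\mapsto f(a)\cdot y\rangle$ if $o=0$; - $\rho(\langle x,o,f\rangle\cdot\langle y,p,g\rangle)=\langle\min\{o,p\},a\mapsto f(a)\cdot y+g(a)\rangle$ if $o=1$. $\lambda$ preserves an axiom $t_1=t_2$ if, for every set $X$ and every instantiation of its variables by elements of $X\times FX$, $\lambda_X(t_1)$ and $\lambda_X(t_2)$ are related by the lifting $\mathrm{Rel}(\mathrm{Id}\times F)$ of the congruence $\ker(q_X)$ on $T_\Sigma X$. This means their term components and their derivatives $a\mapsto(\cdot)$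 at every $a$ are identified modulo the idempotent semiring axioms, and their output bits are equal. A morphism of distributive laws $\tau\colon\lambda\Rightarrow\kappa$ is a monad morphism $\tau$ with $\kappa\circ\tau_H=H\tau\circ\lambda$. *)

(* Defs.v *)
From Stdlib Require Import List.
Import ListNotations.
Set Implicit Arguments.

Definition F (A X : Type) : Type := (bool * (A -> X))%type.
Definition Fmap (A X Y : Type) (f : X -> Y) (p : F A X) : F A Y :=
  (fst p, fun a => f (snd p a)).
Definition H (A X : Type) : Type := (X * F A X)%type.
Definition Hmap (A X Y : Type) (f : X -> Y) (p : H A X) : H A Y :=
  (f (fst p), Fmap f (snd p)).

Inductive Sig (X : Type) : Type :=
| SZero : Sig X
| SOne : Sig X
| SPlus : X -> X -> Sig X
| STimes : X -> X -> Sig X.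
Arguments SZero {X}. Arguments SOne {X}.

Inductive term (X : Type) : Type :=
| Var : X -> term X
| Zero : term X
| One : term X
| Plus : term X -> term X -> term X
| Times : term X -> term X -> term X.
Arguments Zero {X}. Arguments One {X}.

Fixpoint tbind (X Y : Type) (s : X -> term Y) (t : term X) : term Y :=
  match t with
  | Var x => s x
  | Zero => Zero
  | One => One
  | Plus t u => Plus (tbind s t) (tbind s u)
  | Times t u => Times (tbind s t) (tbind s u)
  end.
Definition tmap (X Y : Type) (f : X -> Y) (t : term X) : term Y :=
  tbind (fun x => Var (f x)) t.
Definition tjoin (X : Type) (t : term (term X)) : term X := tbind (fun u => u) t.

Definition rho (A Y : Type) (s : Sig (H A Y)) : F A (term Y) :=
  match s with
  | SZero => (false, fun _ => Zero)
  | SOne => (true, fun _ => Zero)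
  | SPlus (_, (o, f)) (_, (p, g)) =>
      (orb o p, fun a => Plus (Var (f a)) (Var (g a)))
  | STimes (_, (o, f)) (y, (p, g)) =>
      (andb o p,
       fun a => if o then Plus (Times (Var (f a)) (Var y)) (Var (g a))
                else Times (Var (f a)) (Var y))
  end.

(* ---------- The distributive law lambda : T_Sigma (Id x F) => (Id x F) T_Sigma
   induced by rho (standard inductive construction:
     lambda (eta h)        = H eta h,
     lambda (sigma(t_i))   = < sigma (pi1 lambda t_i) , F mu (rho_T (lambda t_i)) > ). *)
Fixpoint lam (A X : Type) (t : term (H A X)) : H A (term X) :=
  match t with
  | Var h => (Var (fst h), Fmap (@Var X) (snd h))
  | Zero => (Zero, Fmap (@tjoin X) (rho (A := A) (Y := term X) SZero))
  | One => (One, Fmap (@tjoin X) (rho (A := A) (Y := term X) SOne))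
  | Plus t u =>
      let l1 := lam t in let l2 := lam u in
      (Plus (fst l1) (fst l2), Fmap (@tjoin X) (rho (SPlus l1 l2)))
  | Times t u =>
      let l1 := lam t in let l2 := lam u in
      (Times (fst l1) (fst l2), Fmap (@tjoin X) (rho (STimes l1 l2)))
  end.

Inductive isr_axiom : term nat -> term nat -> Prop :=
| ax_plus_assoc : isr_axiom (Plus (Plus (Var 0) (Var 1)) (Var 2))
                            (Plus (Var 0) (Plus (Var 1) (Var 2)))
| ax_plus_comm : isr_axiom (Plus (Var 0) (Var 1)) (Plus (Var 1) (Var 0))
| ax_plus_zero : isr_axiom (Plus (Var 0) Zero) (Var 0)
| ax_plus_idem : isr_axiom (Plus (Var 0) (Var 0)) (Var 0)
| ax_times_assoc : isr_axiom (Times (Times (Var 0) (Var 1)) (Var 2))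
                             (Times (Var 0) (Times (Var 1) (Var 2)))
| ax_one_l : isr_axiom (Times One (Var 0)) (Var 0)
| ax_one_r : isr_axiom (Times (Var 0) One) (Var 0)
| ax_distr_l : isr_axiom (Times (Var 0) (Plus (Var 1) (Var 2)))
                         (Plus (Times (Var 0) (Var 1)) (Times (Var 0) (Var 2)))
| ax_distr_r : isr_axiom (Times (Plus (Var 0) (Var 1)) (Var 2))
                         (Plus (Times (Var 0) (Var 2)) (Times (Var 1) (Var 2)))
| ax_zero_l : isr_axiom (Times Zero (Var 0)) Zero
| ax_zero_r : isr_axiom (Times (Var 0) Zero) Zero.

(* ker(q_X): the least congruence on T_Sigma X containing all instances of the axioms *)
Inductive isr_eq (X : Type) : term X -> term X -> Prop :=
| isr_refl : forall t, isr_eq t t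
| isr_sym : forall t u, isr_eq t u -> isr_eq u t
| isr_trans : forall t u v, isr_eq t u -> isr_eq u v -> isr_eq t v
| isr_plus : forall t t' u u', isr_eq t t' -> isr_eq u u' -> isr_eq (Plus t u) (Plus t' u')
| isr_times : forall t t' u u', isr_eq t t' -> isr_eq u u' -> isr_eq (Times t u) (Times t' u')
| isr_ax : forall l r, isr_axiom l r -> forall s : nat -> term X,
    isr_eq (tbind s l) (tbind s r).

Definition relH (A X : Type) (R : X -> X -> Prop) (p q : H A X) : Prop :=
  R (fst p) (fst q) /\ fst (snd p) = fst (snd q) /\
  forall a, R (snd (snd p) a) (snd (snd q) a).

Definition preserves_axiom (A : Type) (l r : term nat) : Prop :=
  forall (X : Type) (v : nat -> H A X),
    relH (@isr_eq X) (lam (tmap v l)) (lam (tmap v r)).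

Definition lang (X : Type) := list X -> Prop.
Definition finite_lang (X : Type) (L : lang X) : Prop :=
  exists s : list (list X), forall w, L w <-> In w s.
Definition PW (X : Type) : Type := { L : lang X | finite_lang L }.

Lemma PWmap_fin (X Y : Type) (f : X -> Y) (L : PW X) :
  finite_lang (fun w' => exists w, proj1_sig L w /\ w' = map f w).
Proof.
  destruct L as [L [s Hs]]; simpl.
  exists (map (map f) s); intro w'; rewrite in_map_iff; split.
  - intros [w [Hw ->]]; exists w; split; [reflexivity | apply Hs; exact Hw].
  - intros [w [<- Hw]]; exists w; split; [apply Hs; exact Hw | reflexivity].
Qed.
Definition PWmap (X Y : Type) (f : X -> Y) (L : PW X) : PW Y :=
  exist _ _ (PWmap_fin f L).

Lemma PWunit_fin (X : Type) (x : X) : finite_lang (fun w => w = [x]).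
Proof.
  exists [[x]]; intro w; simpl; split.
  - intros ->; left; reflexivity.
  - intros [<- | []]; reflexivity.
Qed.
Definition PWunit (X : Type) (x : X) : PW X := exist _ _ (PWunit_fin x).

Fixpoint concat_in (X : Type) (Ls : list (PW X)) (w : list X) : Prop :=
  match Ls with
  | [] => w = []
  | L :: Ls' => exists w1 w2, proj1_sig L w1 /\ concat_in Ls' w2 /\ w = w1 ++ w2
  end.

Lemma concat_in_fin (X : Type) (Ls : list (PW X)) : finite_lang (concat_in Ls).
Proof.
  induction Ls as [|[L [sL HL]] Ls [sR HR]]; simpl.
  - exists [[]]; intro w; simpl; split.
    + intros ->; left; reflexivity.
    + intros [<- | []]; reflexivity.
  - exists (flat_map (fun w1 => map (app w1) sR) sL); intro w.
    rewrite in_flat_map; split.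
    + intros [w1 [w2 [H1 [H2 ->]]]]; exists w1; split; [apply HL; exact H1|].
      apply in_map_iff; exists w2; split; [reflexivity | apply HR; exact H2].
    + intros [w1 [H1 H2]]; apply in_map_iff in H2; destruct H2 as [w2 [<- H2]].
      exists w1, w2; split; [apply HL; exact H1|]; split; [apply HR; exact H2|reflexivity].
Qed.

Lemma union_concat_fin (X : Type) (s : list (list (PW X))) :
  finite_lang (fun w => exists Ls, In Ls s /\ concat_in Ls w).
Proof.
  induction s as [|Ls s [s' Hs']].
  - exists []; intro w; simpl; split; [intros [_ [[] _]] | intros []].
  - destruct (concat_in_fin Ls) as [s0 H0].
    exists (s0 ++ s'); intro w; rewrite in_app_iff; split.
    + intros [Ls' [[<- | Hin] Hc]].
      * left; apply H0; exact Hc.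
      * right; apply Hs'; exists Ls'; split; assumption.
    + intros [Hw | Hw].
      * exists Ls; split; [left; reflexivity | apply H0; exact Hw].
      * apply Hs' in Hw; destruct Hw as [Ls' [Hin Hc]].
        exists Ls'; split; [right; exact Hin | exact Hc].
Qed.

Lemma PWmu_fin (X : Type) (LL : PW (PW X)) :
  finite_lang (fun w => exists Ls, proj1_sig LL Ls /\ concat_in Ls w).
Proof.
  destruct LL as [LL [s Hs]]; simpl.
  destruct (union_concat_fin s) as [s' Hs']; exists s'; intro w.
  rewrite <- Hs'; split; intros [Ls [H1 H2]]; exists Ls; split;
    try (apply Hs; exact H1); exact H2.
Qed.
Definition PWmu (X : Type) (LL : PW (PW X)) : PW X := exist _ _ (PWmu_fin LL).

(* ---------- i o q : T_Sigma => P_omega((-)^star)  (interpretation of a term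
   as the finite language it denotes in the free idempotent semiring) ---------- *)
Fixpoint sem (X : Type) (t : term X) : list (list X) :=
  match t with
  | Var x => [[x]]
  | Zero => []
  | One => [[]]
  | Plus t u => sem t ++ sem u
  | Times t u => flat_map (fun w1 => map (app w1) (sem u)) (sem t)
  end.
Lemma sem_fin (X : Type) (t : term X) : finite_lang (fun w => In w (sem t)).
Proof. exists (sem t); intro w; reflexivity. Qed.
Definition tau (X : Type) (t : term X) : PW X := exist _ _ (sem_fin t).

Definition is_distr_law_PW (A : Type)
    (kappa : forall X : Type, PW (H A X) -> H A (PW X)) : Prop :=
  (forall (X Y : Type) (f : X -> Y) (t : PW (H A X)),
      kappa Y (PWmap (Hmap f) t) = Hmap (PWmap f) (kappa X t)) /\
  (forall (X : Type) (h : H A X), kappa X (PWunit h) = Hmap (@PWunit X) h) /\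
  (forall (X : Type) (t : PW (PW (H A X))),
      kappa X (PWmu t) = Hmap (@PWmu X) (kappa (PW X) (PWmap (kappa X) t))) /\
  (forall (X : Type) (t : PW (H A X)), fst (kappa X t) = PWmap fst t).

Definition tau_monad_morphism : Prop :=
  (forall (X Y : Type) (f : X -> Y) (t : term X),
      tau (tmap f t) = PWmap f (tau t)) /\
  (forall (X : Type) (x : X), tau (Var x) = PWunit x) /\
  (forall (X : Type) (t : term (term X)),
      tau (tjoin t) = PWmu (PWmap (@tau X) (tau t))).

Definition distr_law_morphism (A : Type)
    (kappa : forall X : Type, PW (H A X) -> H A (PW X)) : Prop :=
  forall (X : Type) (t : term (H A X)),
    kappa X (tau t) = Hmap (@tau X) (lam t).

(* Main.v *)
Require Import Defs.
From Stdlib Require Import List Setoid Morphisms Bool ClassicalEpsilon FunctionalExtensionality PropExtensionality ProofIrrelevance.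
Import ListNotations.


Definition s3 {X : Type} (a b c : term X) : nat -> term X :=
  fun n => match n with 0 => a | 1 => b | _ => c end.

Lemma isr_refl' {X} (t : term X) : isr_eq t t. Proof. apply isr_refl. Qed.
Lemma isr_sym' {X} (t u : term X) : isr_eq t u -> isr_eq u t. Proof. apply isr_sym. Qed.
Lemma isr_trans' {X} (t u v : term X) : isr_eq t u -> isr_eq u v -> isr_eq t v. Proof. apply isr_trans. Qed.

Add Parametric Relation X : (term X) (@isr_eq X)
  reflexivity proved by (@isr_refl' X) symmetry proved by (@isr_sym' X)
  transitivity proved by (@isr_trans' X) as isr_rel.
Add Parametric Morphism X : (@Plus X) with signature (@isr_eq X) ==> (@isr_eq X) ==> (@isr_eq X) as plus_mor.
Proof. intros; apply isr_plus; auto. Qed.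
Add Parametric Morphism X : (@Times X) with signature (@isr_eq X) ==> (@isr_eq X) ==> (@isr_eq X) as times_mor.
Proof. intros; apply isr_times; auto. Qed.


Lemma e_pA {X} (a b c : term X) : isr_eq (Plus (Plus a b) c) (Plus a (Plus b c)).
Proof. exact (isr_ax ax_plus_assoc (s3 a b c)). Qed.
Lemma e_pC {X} (a b : term X) : isr_eq (Plus a b) (Plus b a).
Proof. exact (isr_ax ax_plus_comm (s3 a b a)). Qed.
Lemma e_p0 {X} (a : term X) : isr_eq (Plus a Zero) a.
Proof. exact (isr_ax ax_plus_zero (s3 a a a)). Qed.
Lemma e_pI {X} (a : term X) : isr_eq (Plus a a) a.
Proof. exact (isr_ax ax_plus_idem (s3 a a a)). Qed.
Lemma e_tA {X} (a b c : term X) : isr_eq (Times (Times a b) c) (Times a (Times b c)).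
Proof. exact (isr_ax ax_times_assoc (s3 a b c)). Qed.
Lemma e_1l {X} (a : term X) : isr_eq (Times One a) a.
Proof. exact (isr_ax ax_one_l (s3 a a a)). Qed.
Lemma e_1r {X} (a : term X) : isr_eq (Times a One) a.
Proof. exact (isr_ax ax_one_r (s3 a a a)). Qed.
Lemma e_dl {X} (a b c : term X) : isr_eq (Times a (Plus b c)) (Plus (Times a b) (Times a c)).
Proof. exact (isr_ax ax_distr_l (s3 a b c)). Qed.
Lemma e_dr {X} (a b c : term X) : isr_eq (Times (Plus a b) c) (Plus (Times a c) (Times b c)).
Proof. exact (isr_ax ax_distr_r (s3 a b c)). Qed.
Lemma e_0l {X} (a : term X) : isr_eq (Times Zero a) Zero.
Proof. exact (isr_ax ax_zero_l (s3 a a a)). Qed.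
Lemma e_0r {X} (a : term X) : isr_eq (Times a Zero) Zero.
Proof. exact (isr_ax ax_zero_r (s3 a a a)). Qed.

Lemma tmap_tmap {X Y Z} (f : X -> Y) (g : Y -> Z) (t : term X) :
  tmap g (tmap f t) = tmap (fun x => g (f x)) t.
Proof. induction t; cbn in *; unfold tmap in *; try rewrite IHt1, IHt2; reflexivity. Qed.

Lemma tmap_bind {X Y} (f : X -> Y) (t : term nat) (v : nat -> X) :
  tmap f (tmap v t) = tbind (fun n => Var (f (v n))) t.
Proof. induction t; cbn in *; unfold tmap in *; try rewrite IHt1, IHt2; reflexivity. Qed.

Lemma lam_fst {A X} (t : term (H A X)) : fst (lam t) = tmap fst t.
Proof. induction t; cbn; unfold tmap in *; try rewrite IHt1, IHt2; reflexivity. Qed.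


Lemma swap_mid {X} (p q r s : term X) : isr_eq (Plus (Plus p q) (Plus r s)) (Plus (Plus p r) (Plus q s)).
Proof. rewrite !e_pA. apply plus_mor; [reflexivity|]. rewrite <- !e_pA, (e_pC q r). reflexivity. Qed.
Lemma L_ta1 {X} (a x1 b x2 c : term X) : isr_eq (Plus (Times (Plus (Times a x1) b) x2) c) (Plus (Times a (Times x1 x2)) (Plus (Times b x2) c)).
Proof. rewrite e_dr, e_tA, !e_pA. reflexivity. Qed.
Lemma L_ta2 {X} (a x1 b x2 : term X) : isr_eq (Times (Plus (Times a x1) b) x2) (Plus (Times a (Times x1 x2)) (Times b x2)).
Proof. rewrite e_dr, e_tA. reflexivity. Qed.
Lemma L_1l {X} (x a : term X) : isr_eq (Plus (Times Zero x) a) a.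
Proof. rewrite e_0l, e_pC, e_p0. reflexivity. Qed.
Lemma L_1r {X} (a : term X) : isr_eq (Plus (Times a One) Zero) a.
Proof. rewrite e_p0, e_1r. reflexivity. Qed.
Lemma L_0r {X} (a : term X) : isr_eq (Plus (Times a Zero) Zero) Zero.
Proof. rewrite e_p0, e_0r. reflexivity. Qed.
Lemma L_dl1 {X} (a x1 x2 b c : term X) : isr_eq (Plus (Times a (Plus x1 x2)) (Plus b c)) (Plus (Plus (Times a x1) b) (Plus (Times a x2) c)).
Proof. rewrite e_dl, swap_mid. reflexivity. Qed.
Lemma L_dr1 {X} (a b x c : term X) : isr_eq (Plus (Times (Plus a b) x) c) (Plus (Plus (Times a x) c) (Plus (Times b x) c)).
Proof. rewrite e_dr, (swap_mid (Times a x)), e_pI. reflexivity. Qed.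
Lemma L_dr2 {X} (a b x c : term X) : isr_eq (Plus (Times (Plus a b) x) c) (Plus (Plus (Times a x) c) (Times b x)).
Proof. rewrite e_dr, !e_pA, (e_pC (Times b x) c). reflexivity. Qed.
Lemma L_dr3 {X} (a b x c : term X) : isr_eq (Plus (Times (Plus a b) x) c) (Plus (Times a x) (Plus (Times b x) c)).
Proof. rewrite e_dr, e_pA. reflexivity. Qed.

Lemma part1 (A : Type) : forall l r : term nat, isr_axiom l r -> preserves_axiom A l r.
Proof.
  intros l r Hax X v. split; [| split].
  - rewrite !lam_fst, !tmap_bind. apply isr_ax; exact Hax.
  - destruct Hax; cbn;
    destruct (v 0) as [x0 [o0 f0]], (v 1) as [x1 [o1 f1]], (v 2) as [x2 [o2 f2]];
    destruct o0, o1, o2; reflexivity.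
  - intro a. destruct Hax; cbn;
    destruct (v 0) as [x0 [o0 f0]], (v 1) as [x1 [o1 f1]], (v 2) as [x2 [o2 f2]];
    destruct o0, o1, o2; cbn;
    first [ apply e_pA | apply e_pC | apply e_p0 | apply e_pI | apply e_tA | apply e_1r
          | apply e_dl | apply e_dr | apply e_0l | apply e_0r | apply L_ta1 | apply L_ta2
          | apply L_1l | apply L_1r | apply L_0r | apply L_dl1 | apply L_dr1 | apply L_dr2
          | apply L_dr3 ].
Qed.


Lemma PW_ext {X} (L1 L2 : PW X) : (forall w, proj1_sig L1 w <-> proj1_sig L2 w) -> L1 = L2.
Proof.
  destruct L1 as [l1 p1], L2 as [l2 p2]; simpl; intro Hx.
  assert (l1 = l2) by (extensionality w; apply propositional_extensionality; auto).
  subst. f_equal. apply proof_irrelevance.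
Qed.

Lemma H_eq {A X} (p q : H A X) : fst p = fst q -> fst (snd p) = fst (snd q) ->
  (forall a, snd (snd p) a = snd (snd q) a) -> p = q.
Proof.
  destruct p as [x [o f]], q as [y [o' g]]; simpl; intros -> -> Hf.
  f_equal; f_equal; extensionality a; auto.
Qed.

Lemma in_sem_times {X} (t u : term X) w :
  In w (sem (Times t u)) <-> exists w1 w2, In w1 (sem t) /\ In w2 (sem u) /\ w = w1 ++ w2.
Proof.
  simpl; rewrite in_flat_map; split.
  - intros [w1 [H1 H2]]; apply in_map_iff in H2; destruct H2 as [w2 [<- H2]]; eauto.
  - intros [w1 [w2 [H1 [H2 ->]]]]; exists w1; split; auto; apply in_map_iff; eauto.
Qed.

Lemma tmap_Plus {X Y} (f : X -> Y) t u : tmap f (Plus t u) = Plus (tmap f t) (tmap f u).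
Proof. reflexivity. Qed.
Lemma tmap_Times {X Y} (f : X -> Y) t u : tmap f (Times t u) = Times (tmap f t) (tmap f u).
Proof. reflexivity. Qed.
Lemma tjoin_Plus {X} (t u : term (term X)) : tjoin (Plus t u) = Plus (tjoin t) (tjoin u).
Proof. reflexivity. Qed.
Lemma tjoin_Times {X} (t u : term (term X)) : tjoin (Times t u) = Times (tjoin t) (tjoin u).
Proof. reflexivity. Qed.

Lemma in_sem_tmap {X Y} (f : X -> Y) t w :
  In w (sem (tmap f t)) <-> exists w0, In w0 (sem t) /\ w = map f w0.
Proof.
  revert w; induction t; intro w.
  - simpl; split.
    + intros [<- | []]; exists [x]; auto.
    + intros [w0 [[<- | []] ->]]; auto.
  - simpl; split; [intros [] | intros [? [[] _]]].
  - simpl; split.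
    + intros [<- | []]; exists []; auto.
    + intros [w0 [[<- | []] ->]]; auto.
  - rewrite tmap_Plus; simpl; rewrite in_app_iff, IHt1, IHt2; split.
    + intros [[w0 [? ?]] | [w0 [? ?]]]; exists w0; rewrite in_app_iff; auto.
    + intros [w0 [Hi ?]]; rewrite in_app_iff in Hi; destruct Hi; [left|right]; eauto.
  - rewrite tmap_Times, !in_sem_times; split.
    + intros [w1 [w2 [H1 [H2 ->]]]]. apply IHt1 in H1; apply IHt2 in H2.
      destruct H1 as [v1 [H1 ->]], H2 as [v2 [H2 ->]].
      exists (v1 ++ v2); rewrite map_app; split; auto.
      apply in_sem_times; eauto 7.
    + intros [w0 [Hw ->]]. apply in_sem_times in Hw. destruct Hw as [v1 [v2 [H1 [H2 ->]]]].
      exists (map f v1), (map f v2); rewrite map_app; split; [apply IHt1|split; [apply IHt2|]]; eauto.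
Qed.

Lemma tau_nat {X Y} (f : X -> Y) (t : term X) : tau (tmap f t) = PWmap f (tau t).
Proof. apply PW_ext; intro w; simpl. apply in_sem_tmap. Qed.

Lemma tau_unit {X} (x : X) : tau (Var x) = PWunit x.
Proof. apply PW_ext; intro w; simpl; split; [intros [<- | []]; auto | intros ->; auto]. Qed.

Lemma concat_in_app {X} (L1 L2 : list (PW X)) w :
  concat_in (L1 ++ L2) w <-> exists w1 w2, concat_in L1 w1 /\ concat_in L2 w2 /\ w = w1 ++ w2.
Proof.
  revert w; induction L1 as [|L L1 IH]; intro w; simpl.
  - split; [intro; exists [], w; auto | intros [w1 [w2 [-> [? ->]]]]; auto].
  - split.
    + intros [u1 [u2 [H1 [H2 ->]]]]. apply IH in H2. destruct H2 as [v1 [v2 [H2 [H3 ->]]]].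
      exists (u1 ++ v1), v2; split; [exists u1, v1; auto|]; split; auto; apply app_assoc.
    + intros [w1 [w2 [[u1 [u2 [H1 [H2 ->]]]] [H3 ->]]]].
      exists u1, (u2 ++ w2); split; auto; split; [apply IH; eauto|]; symmetry; apply app_assoc.
Qed.

Lemma in_sem_tjoin {X} (t : term (term X)) w :
  In w (sem (tjoin t)) <-> exists Ls, (exists ws, In ws (sem t) /\ Ls = map (@tau X) ws) /\ concat_in Ls w.
Proof.
  revert w; induction t; intro w.
  - simpl. split.
    + intro Hw; exists [tau x]; split; [exists [x]; auto|]. exists w, []; simpl; rewrite app_nil_r; auto.
    + intros [Ls [[ws [[<- | []] ->]] Hc]]. simpl in Hc. destruct Hc as [w1 [w2 [H1 [-> ->]]]].
      rewrite app_nil_r; exact H1.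
  - simpl; split; [intros [] | intros [? [[? [[] _]] _]]].
  - simpl; split.
    + intros [<- | []]; exists []; split; [exists []; auto | reflexivity].
    + intros [Ls [[ws [[<- | []] ->]] Hc]]; simpl in Hc; auto.
  - rewrite tjoin_Plus; simpl; rewrite in_app_iff, IHt1, IHt2; split.
    + intros [[Ls [[ws [? ?]] ?]] | [Ls [[ws [? ?]] ?]]]; exists Ls; split; auto; exists ws; rewrite in_app_iff; auto.
    + intros [Ls [[ws [Hi ?]] ?]]; rewrite in_app_iff in Hi; destruct Hi; [left|right]; eauto.
  - rewrite tjoin_Times, in_sem_times; split.
    + intros [w1 [w2 [H1 [H2 ->]]]]. apply IHt1 in H1; apply IHt2 in H2.
      destruct H1 as [L1 [[ws1 [Hw1 ->]] Hc1]], H2 as [L2 [[ws2 [Hw2 ->]] Hc2]].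
      exists (map (@tau X) (ws1 ++ ws2)); split.
      * exists (ws1 ++ ws2); split; auto; apply in_sem_times; eauto 7.
      * rewrite map_app; apply concat_in_app; eauto.
    + intros [Ls [[ws [Hw ->]] Hc]]. apply in_sem_times in Hw. destruct Hw as [ws1 [ws2 [H1 [H2 ->]]]].
      rewrite map_app in Hc; apply concat_in_app in Hc. destruct Hc as [w1 [w2 [Hc1 [Hc2 ->]]]].
      exists w1, w2; split; [apply IHt1; eauto | split; [apply IHt2; eauto | auto]].
Qed.

Lemma tau_mult {X} (t : term (term X)) : tau (tjoin t) = PWmu (PWmap (@tau X) (tau t)).
Proof. apply PW_ext; intro w; simpl. apply in_sem_tjoin. Qed.

Lemma tau_mm : tau_monad_morphism.
Proof. split; [|split]; intros; [apply tau_nat | apply tau_unit | apply tau_mult]. Qed.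


Definition allb {A X} (w : list (H A X)) : bool := forallb (fun h => fst (snd h)) w.
Fixpoint dl {A X} (a : A) (w : list (H A X)) : list (list X) :=
  match w with
  | [] => []
  | h :: w' => (snd (snd h) a :: map fst w') :: (if fst (snd h) then dl a w' else [])
  end.
Definition Dpred {A X} (a : A) (L : PW (H A X)) (v : list X) : Prop :=
  exists w, proj1_sig L w /\ In v (dl a w).
Lemma Dfin {A X} (a : A) (L : PW (H A X)) : finite_lang (Dpred a L).
Proof.
  destruct L as [L [s Hs]]; exists (flat_map (dl a) s); intro v; unfold Dpred; simpl.
  rewrite in_flat_map; split; intros [w [H1 H2]]; exists w; split; auto; apply Hs; auto.
Qed.
Definition Dlang {A X} (a : A) (L : PW (H A X)) : PW X := exist _ _ (Dfin a L).
Definition outb {A X} (L : PW (H A X)) : bool :=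
  if excluded_middle_informative (exists w, proj1_sig L w /\ allb w = true) then true else false.
Definition kappa (A X : Type) (L : PW (H A X)) : H A (PW X) :=
  (PWmap fst L, (outb L, fun a => Dlang a L)).

Lemma lam_P_out {A X} (t u : term (H A X)) :
  fst (snd (lam (Plus t u))) = fst (snd (lam t)) || fst (snd (lam u)).
Proof. simpl; destruct (lam t) as [? [? ?]], (lam u) as [? [? ?]]; reflexivity. Qed.
Lemma lam_P_d {A X} (t u : term (H A X)) a :
  snd (snd (lam (Plus t u))) a = Plus (snd (snd (lam t)) a) (snd (snd (lam u)) a).
Proof. simpl; destruct (lam t) as [? [? ?]], (lam u) as [? [? ?]]; reflexivity. Qed.
Lemma lam_T_out {A X} (t u : term (H A X)) :
  fst (snd (lam (Times t u))) = fst (snd (lam t)) && fst (snd (lam u)).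
Proof. simpl; destruct (lam t) as [? [? ?]], (lam u) as [? [? ?]]; reflexivity. Qed.
Lemma lam_T_d {A X} (t u : term (H A X)) a :
  snd (snd (lam (Times t u))) a =
  if fst (snd (lam t)) then Plus (Times (snd (snd (lam t)) a) (fst (lam u))) (snd (snd (lam u)) a)
  else Times (snd (snd (lam t)) a) (fst (lam u)).
Proof. simpl; destruct (lam t) as [? [o ?]], (lam u) as [? [? ?]]; destruct o; reflexivity. Qed.

Lemma allb_app {A X} (w1 w2 : list (H A X)) : allb (w1 ++ w2) = allb w1 && allb w2.
Proof. unfold allb; apply forallb_app. Qed.

Lemma out_lam {A X} (t : term (H A X)) :
  fst (snd (lam t)) = true <-> exists w, In w (sem t) /\ allb w = true.
Proof.
  induction t.
  - destruct x as [x [o f]]; simpl. split.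
    + intro Ho; exists [(x, (o, f))]; split; auto; unfold allb; simpl; rewrite Ho; auto.
    + intros [w [[<- | []] Hw]]; unfold allb in Hw; simpl in Hw; rewrite andb_true_r in Hw; auto.
  - simpl; split; [discriminate | intros [? [[] _]]].
  - simpl; split; [intros _; exists []; auto | auto].
  - rewrite lam_P_out, orb_true_iff, IHt1, IHt2; simpl; split.
    + intros [[w [? ?]] | [w [? ?]]]; exists w; rewrite in_app_iff; auto.
    + intros [w [Hi ?]]; rewrite in_app_iff in Hi; destruct Hi; [left|right]; eauto.
  - rewrite lam_T_out, andb_true_iff, IHt1, IHt2; split.
    + intros [[w1 [? ?]] [w2 [? ?]]]; exists (w1 ++ w2); rewrite allb_app; split.
      * apply in_sem_times; eauto 7.
      * apply andb_true_iff; auto.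
    + intros [w [Hw Ha]]; apply in_sem_times in Hw; destruct Hw as [w1 [w2 [H1 [H2 ->]]]].
      rewrite allb_app, andb_true_iff in Ha; destruct Ha; split; eauto.
Qed.

Lemma dl_app {A X} (a : A) (w1 w2 : list (H A X)) :
  dl a (w1 ++ w2) = map (fun v => v ++ map fst w2) (dl a w1) ++ (if allb w1 then dl a w2 else []).
Proof.
  induction w1 as [|h w1 IH]; simpl; auto.
  destruct h as [x [o f]]; unfold allb in *; simpl. rewrite map_app. destruct o; simpl.
  - rewrite IH; reflexivity.
  - reflexivity.
Qed.

Lemma in_dl_app {A X} (a : A) (w1 w2 : list (H A X)) v :
  In v (dl a (w1 ++ w2)) <->
  (exists v1, In v1 (dl a w1) /\ v = v1 ++ map fst w2) \/ (allb w1 = true /\ In v (dl a w2)).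
Proof.
  rewrite dl_app, in_app_iff, in_map_iff. destruct (allb w1); simpl.
  - split; (intros [[v1 [? ?]] | ?]; [left; eauto | right; intuition]).
  - split; [intros [[v1 [? ?]] | []]; left; eauto | intros [[v1 [? ?]] | [? _]]; [left; eauto | discriminate]].
Qed.

Lemma sem_Plus {X} (t u : term X) : sem (Plus t u) = sem t ++ sem u.
Proof. reflexivity. Qed.

Lemma deriv_lam {A X} (t : term (H A X)) a v :
  In v (sem (snd (snd (lam t)) a)) <-> exists w, In w (sem t) /\ In v (dl a w).
Proof.
  revert v; induction t; intro v.
  - simpl. destruct x as [x [o f]]; simpl. split.
    + intros [<- | []]; exists [(x, (o, f))]; split; auto; simpl; auto.
    + intros [w [[<- | []] Hv]]; simpl in Hv; destruct o; simpl in Hv; intuition.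
  - simpl; split; [intros [] | intros [? [[] _]]].
  - simpl; split; [intros [] | intros [w [[<- | []] []]]].
  - rewrite lam_P_d; simpl; rewrite in_app_iff, IHt1, IHt2; split.
    + intros [[w [? ?]] | [w [? ?]]]; exists w; rewrite in_app_iff; auto.
    + intros [w [Hi ?]]; rewrite in_app_iff in Hi; destruct Hi; [left|right]; eauto.
  - rewrite lam_T_d. destruct (fst (snd (lam t1))) eqn:Ho.
    + rewrite sem_Plus, in_app_iff, (in_sem_times (snd (snd (lam t1)) a)), IHt2; split.
      * intros [[v1 [v2 [H1 [H2 ->]]]] | [w2 [H2 Hv]]].
        -- apply IHt1 in H1; destruct H1 as [w1 [Hw1 Hv1]].
           rewrite lam_fst in H2; apply in_sem_tmap in H2; destruct H2 as [w2 [Hw2 ->]].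
           exists (w1 ++ w2); split; [apply in_sem_times; eauto 7 | apply in_dl_app; left; eauto].
        -- apply out_lam in Ho; destruct Ho as [w1 [Hw1 Ha]].
           exists (w1 ++ w2); split; [apply in_sem_times; eauto 7 | apply in_dl_app; right; auto].
      * intros [w [Hw Hv]]; apply in_sem_times in Hw; destruct Hw as [w1 [w2 [H1 [H2 ->]]]].
        apply in_dl_app in Hv; destruct Hv as [[v1 [Hv1 ->]] | [_ Hv]].
        -- left; exists v1, (map fst w2); split; [apply IHt1; eauto|]; split; auto.
           rewrite lam_fst; apply in_sem_tmap; eauto.
        -- right; eauto.
    + rewrite (in_sem_times (snd (snd (lam t1)) a)); split.
      * intros [v1 [v2 [H1 [H2 ->]]]].
        apply IHt1 in H1; destruct H1 as [w1 [Hw1 Hv1]].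
        rewrite lam_fst in H2; apply in_sem_tmap in H2; destruct H2 as [w2 [Hw2 ->]].
        exists (w1 ++ w2); split; [apply in_sem_times; eauto 7 | apply in_dl_app; left; eauto].
      * intros [w [Hw Hv]]; apply in_sem_times in Hw; destruct Hw as [w1 [w2 [H1 [H2 ->]]]].
        apply in_dl_app in Hv; destruct Hv as [[v1 [Hv1 ->]] | [Ha Hv]].
        -- exists v1, (map fst w2); split; [apply IHt1; eauto|]; split; auto.
           rewrite lam_fst; apply in_sem_tmap; eauto.
        -- exfalso. assert (fst (snd (lam t1)) = true) by (apply out_lam; eauto). congruence.
Qed.

Lemma DLM (A : Type) : distr_law_morphism (kappa A).
Proof.
  intros X t. apply H_eq; simpl.
  - rewrite lam_fst, tau_nat; reflexivity.
  - unfold outb. destruct excluded_middle_informative as [He | He]; simpl in He.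
    + symmetry; apply out_lam; exact He.
    + destruct (fst (snd (lam t))) eqn:Ho; auto. exfalso; apply He, out_lam, Ho.
  - intro a. apply PW_ext; intro v; simpl. unfold Dpred; simpl. symmetry; apply deriv_lam.
Qed.


Lemma lam_nat_out {A X Y} (f : X -> Y) (t : term (H A X)) :
  fst (snd (lam (tmap (Hmap f) t))) = fst (snd (lam t)).
Proof.
  induction t; try reflexivity.
  - rewrite tmap_Plus, !lam_P_out, IHt1, IHt2; reflexivity.
  - rewrite tmap_Times, !lam_T_out, IHt1, IHt2; reflexivity.
Qed.

Lemma lam_nat_d {A X Y} (f : X -> Y) (t : term (H A X)) a :
  snd (snd (lam (tmap (Hmap f) t))) a = tmap f (snd (snd (lam t)) a).
Proof.
  induction t; try reflexivity.
  - rewrite tmap_Plus, !lam_P_d, IHt1, IHt2; reflexivity.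
  - rewrite tmap_Times, !lam_T_d, lam_nat_out, IHt1, IHt2, !lam_fst.
    destruct (fst (snd (lam t1))); rewrite ?tmap_Plus, ?tmap_Times, !tmap_tmap; reflexivity.
Qed.

Fixpoint wordt {X} (w : list X) : term X :=
  match w with [] => One | x :: w' => Times (Var x) (wordt w') end.
Fixpoint sumt {X} (s : list (list X)) : term X :=
  match s with [] => Zero | w :: s' => Plus (wordt w) (sumt s') end.
Lemma sem_wordt {X} (w : list X) : sem (wordt w) = [w].
Proof. induction w; simpl; auto. rewrite IHw; reflexivity. Qed.
Lemma sem_sumt {X} (s : list (list X)) : sem (sumt s) = s.
Proof. induction s; simpl; auto. rewrite sem_wordt, IHs; reflexivity. Qed.

Lemma tau_surj {X} (L : PW X) : exists t, tau t = L.
Proof.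
  destruct L as [L [s Hs]]. exists (sumt s). apply PW_ext; intro w; simpl.
  rewrite sem_sumt, Hs; tauto.
Qed.

Lemma tau_surj2 {Y} (s0 : term (PW Y)) : exists s : term (term Y), tmap (@tau Y) s = s0.
Proof.
  induction s0.
  - destruct (tau_surj x) as [t <-]. exists (Var t); reflexivity.
  - exists Zero; reflexivity.
  - exists One; reflexivity.
  - destruct IHs0_1 as [s1 <-], IHs0_2 as [s2 <-]. exists (Plus s1 s2); reflexivity.
  - destruct IHs0_1 as [s1 <-], IHs0_2 as [s2 <-]. exists (Times s1 s2); reflexivity.
Qed.

Lemma kappa_nat (A X Y : Type) (f : X -> Y) (t : PW (H A X)) :
  kappa A Y (PWmap (Hmap f) t) = Hmap (PWmap f) (kappa A X t).
Proof.
  destruct (tau_surj t) as [s <-].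
  rewrite <- tau_nat, !DLM. apply H_eq; simpl.
  - rewrite !lam_fst, !tmap_tmap, <- tau_nat, tmap_tmap. reflexivity.
  - apply lam_nat_out.
  - intro a; rewrite lam_nat_d, tau_nat; reflexivity.
Qed.

Lemma lam_mult_fst {A X} (s : term (term (H A X))) :
  fst (lam (tjoin s)) = tjoin (fst (lam (tmap (@lam A X) s))).
Proof. rewrite !lam_fst, tmap_tmap. induction s; try reflexivity.
  - unfold tjoin, tmap; simpl; rewrite lam_fst; reflexivity.
  - rewrite tjoin_Plus, !tmap_Plus, tjoin_Plus, IHs1, IHs2; reflexivity.
  - rewrite tjoin_Times, !tmap_Times, tjoin_Times, IHs1, IHs2; reflexivity.
Qed.

Lemma lam_mult_out {A X} (s : term (term (H A X))) :
  fst (snd (lam (tjoin s))) = fst (snd (lam (tmap (@lam A X) s))).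
Proof.
  induction s; try reflexivity.
  - rewrite tjoin_Plus, tmap_Plus, !lam_P_out, IHs1, IHs2; reflexivity.
  - rewrite tjoin_Times, tmap_Times, !lam_T_out, IHs1, IHs2; reflexivity.
Qed.

Lemma lam_mult_d {A X} (s : term (term (H A X))) a :
  snd (snd (lam (tjoin s))) a = tjoin (snd (snd (lam (tmap (@lam A X) s))) a).
Proof.
  induction s; try reflexivity.
  - rewrite tjoin_Plus, tmap_Plus, !lam_P_d, IHs1, IHs2; reflexivity.
  - rewrite tjoin_Times, tmap_Times, !lam_T_d, lam_mult_out, IHs1, IHs2.
    pose proof (lam_mult_fst s2) as E. rewrite E.
    destruct (fst (snd (lam (tmap (@lam A X) s1)))); reflexivity.
Qed.

Lemma kappa_law (A : Type) : is_distr_law_PW (kappa A).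
Proof.
  split; [|split; [|split]].
  - apply kappa_nat.
  - intros X h. rewrite <- tau_unit, DLM. apply H_eq; simpl; auto.
    + apply tau_unit.
    + intro a; apply tau_unit.
  - intros X T. destruct (tau_surj T) as [s0 <-]. destruct (tau_surj2 s0) as [s <-].
    rewrite tau_nat, <- tau_mult, DLM.
    assert (E : PWmap (kappa A X) (PWmap (@tau (H A X)) (tau s)) =
                PWmap (Hmap (@tau X)) (tau (tmap (@lam A X) s))).
    { rewrite <- !tau_nat, !tmap_tmap. f_equal. induction s; try reflexivity.
      - unfold tmap; simpl; rewrite DLM; reflexivity.
      - rewrite !tmap_Plus, IHs1, IHs2; reflexivity.
      - rewrite !tmap_Times, IHs1, IHs2; reflexivity. }
    rewrite E, kappa_nat, DLM. apply H_eq; simpl.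
    + rewrite lam_mult_fst, tau_mult; reflexivity.
    + apply lam_mult_out.
    + intro a; rewrite lam_mult_d, tau_mult; reflexivity.
  - intros X t. reflexivity.
Qed.

Theorem mainTheorem11 (A : Type) :
  (forall l r : term nat, isr_axiom l r -> preserves_axiom A l r) /\
  exists kappa : forall X : Type, PW (H A X) -> H A (PW X),
    is_distr_law_PW kappa /\ tau_monad_morphism /\ distr_law_morphism kappa.
Proof.
  split; [apply part1|]. exists (kappa A). split; [apply kappa_law|]. split; [apply tau_mm | apply DLM].
Qed.
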